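(* Let $(d_1,d_2)\in\mathbb N^2$ and $(p,q)\in\mathbb N^2\setminus\{(0,0)\}$. Then (1) $\mathrm{CG}^0_+(p,q)=\varnothing$ if $qd_1\le pd_2$; (2) $\mathrm{CG}^0_-(p,q)=\varnothing$ if $qd_1\ge pd_2$.
   Context: Dyck paths and gradings: for $d_1,d_2\ge0$, $\mathcal P=\mathcal P(d_1,d_2)$ is the highest lattice path of unit east (horizontal) and north (vertical) edges from $(0,0)$ to $(d_1,d_2)$ never passing strictly above the segment joining them; $\mathcal P_{\mathbf E},\mathcal P_{\mathbf N}$ its horizontal/vertical edge sets; for a set $C$ of edges $C_{\mathbf E},C_{\mathbf N}$, $|C|$ as usual; $\overrightarrow{ef}$ is the set of edges from $e$ to $f$ along the path inclusive, continuing cyclically from the last edge to the first if $f$ comes before $e$. A grading is a map $\omega$ from edges to $\mathbb N$, $\omega(C)=\sum_{e\in C}\omega(e)$; it is compatible if for all $u\in\mathcal P_{\mathbf E},v\in\mathcal P_{\mathbf N}$ with $\omega(u)\omega(v)>0$ some $e\in\overrightarrow{uv}$ satisfies either $e\in\mathcal P_{\mathbf N}\setminus\{v\}$ and $|(\overrightarrow{ue})_{\mathbf N}|=\omega((\overrightarrow{ue})_{\mathbf E})$, or $e\in\mathcal P_{\mathbf E}\setminus\{u\}$ and $|(\overrightarrow{ev})_{\mathbf E}|=\omega((\overrightarrow{ev})_{\mathbf N})$. Shadows: $\operatorname{sh}(e)=\emptyset$ if $\omega(e)=0$; for horizontal $e$, $\operatorname{sh}(e)=(\overrightarrow{ev})_{\mathbf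 N}$ where $v$ is vertical with $|(\overrightarrow{ev})_{\mathbf N}|=\omega((\overrightarrow{ev})_{\mathbf E})$ and $\overrightarrow{ev}$ shortest, or $\mathcal P_{\mathbf N}$ if no such $v$; for vertical $e$, $\operatorname{sh}(e)=(\overrightarrow{ue})_{\mathbf E}$ where $u$ is horizontal with $|(\overrightarrow{ue})_{\mathbf E}|=\omega((\overrightarrow{ue})_{\mathbf N})$ and $\overrightarrow{ue}$ shortest, or $\mathcal P_{\mathbf E}$ if none; $\operatorname{sh}(C)=\bigcup_{e\in C}\operatorname{sh}(e)$. Let $\mathrm{CG}^0_+(p,q)$ be the set of compatible gradings $\omega$ on $\mathcal P(d_1,d_2)$ with $\omega(\mathcal P_{\mathbf N})=p$, $\omega(\mathcal P_{\mathbf E})=q$ and $\omega(\mathcal P_{\mathbf N}\setminus\operatorname{sh}(\mathcal P_{\mathbf E}))=0$, and $\mathrm{CG}^0_-(p,q)$ the set of those with $\omega(\mathcal P_{\mathbf N})=p$, $\omega(\mathcal P_{\mathbf E})=q$ and $\omega(\mathcal P_{\mathbf E}\setminus\operatorname{sh}(\mathcal P_{\mathbf N}))=0$. *)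

(* Defs.v *)
From mathcomp Require Import all_boot.
Set Implicit Arguments. Unset Strict Implicit. Unset Printing Implicit Defensive.

(* Greedy construction of the highest lattice path from (0,0) to (d1,d2)
   never passing strictly above the segment: from the current point (x,y)
   go North (true) if y < d2 and (x, y+1) lies on/below the segment
   (i.e. (y+1) * d1 <= x * d2), otherwise go East (false). *)
Fixpoint walk (d1 d2 fuel x y : nat) : seq bool :=
  match fuel with
  | 0 => [::]
  | f.+1 => if (y < d2) && ((y.+1) * d1 <= x * d2)
            then true :: walk d1 d2 f x y.+1
            else false :: walk d1 d2 f x.+1 y
  end.

Definition dyck_path (d1 d2 : nat) : seq bool := walk d1 d2 (d1 + d2) 0 0.

Definition isN (d1 d2 : nat) (e : 'I_(d1 + d2)) : bool := nth false (dyck_path d1 d2) e.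

Definition PN (d1 d2 : nat) : {set 'I_(d1 + d2)} := [set e | isN e].
Definition PE (d1 d2 : nat) : {set 'I_(d1 + d2)} := [set e | ~~ isN e].

Definition arc (n : nat) (e f : 'I_n) : {set 'I_n} :=
  [set i : 'I_n | if e <= f then (e <= i) && (i <= f) else (e <= i) || (i <= f)].

Definition wt (n : nat) (w : 'I_n -> nat) (C : {set 'I_n}) : nat := \sum_(i in C) w i.

Definition compatible (d1 d2 : nat) (w : 'I_(d1 + d2) -> nat) : Prop :=
  forall u v, u \in PE d1 d2 -> v \in PN d1 d2 -> 0 < w u * w v ->
    exists2 e, e \in arc u v &
      ((e \in PN d1 d2) /\ e != v /\ #|arc u e :&: PN d1 d2| = wt w (arc u e :&: PE d1 d2))
      \/ ((e \in PE d1 d2) /\ e != u /\ #|arc e v :&: PE d1 d2| = wt w (arc e v :&: PN d1 d2)).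

Definition shE_cand (d1 d2 : nat) (w : 'I_(d1 + d2) -> nat) (e v : 'I_(d1 + d2)) : bool :=
  (v \in PN d1 d2) && (#|arc e v :&: PN d1 d2| == wt w (arc e v :&: PE d1 d2)).
Definition shN_cand (d1 d2 : nat) (w : 'I_(d1 + d2) -> nat) (u e : 'I_(d1 + d2)) : bool :=
  (u \in PE d1 d2) && (#|arc u e :&: PE d1 d2| == wt w (arc u e :&: PN d1 d2)).

Definition sh (d1 d2 : nat) (w : 'I_(d1 + d2) -> nat) (e : 'I_(d1 + d2)) : {set 'I_(d1 + d2)} :=
  if w e == 0 then set0 else
  if e \in PE d1 d2 then
    match [pick v | shE_cand w e v &&
                    [forall v', shE_cand w e v' ==> (#|arc e v| <= #|arc e v'|)]] with
    | Some v => arc e v :&: PN d1 d2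
    | None => PN d1 d2
    end
  else
    match [pick u | shN_cand w u e &&
                    [forall u', shN_cand w u' e ==> (#|arc u e| <= #|arc u' e|)]] with
    | Some u => arc u e :&: PE d1 d2
    | None => PE d1 d2
    end.

Definition shset (d1 d2 : nat) (w : 'I_(d1 + d2) -> nat) (C : {set 'I_(d1 + d2)}) :
  {set 'I_(d1 + d2)} := \bigcup_(e in C) sh w e.

Definition CG0plus (d1 d2 p q : nat) (w : 'I_(d1 + d2) -> nat) : Prop :=
  [/\ compatible w, wt w (PN d1 d2) = p, wt w (PE d1 d2) = q &
      wt w (PN d1 d2 :\: shset w (PE d1 d2)) = 0].

Definition CG0minus (d1 d2 p q : nat) (w : 'I_(d1 + d2) -> nat) : Prop :=
  [/\ compatible w, wt w (PN d1 d2) = p, wt w (PE d1 d2) = q &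
      wt w (PE d1 d2 :\: shset w (PN d1 d2)) = 0].

Arguments CG0plus d1 d2 p q w : clear implicits.
Arguments CG0minus d1 d2 p q w : clear implicits.

(* Main.v *)
Require Import Defs.
From mathcomp Require Import all_boot zify.
Import Defs.
Set Implicit Arguments. Unset Strict Implicit. Unset Printing Implicit Defensive.


Section Cyc.
Variable n : nat.

Definition dist (e i : 'I_n) : nat := if e <= i then i - e else i + n - e.

Lemma rot_proof (b : 'I_n) k : (b + k) %% n < n.
Proof. apply: ltn_pmod; exact: leq_ltn_trans (leq0n b) (ltn_ord b). Qed.

Definition rot (b : 'I_n) (k : nat) : 'I_n := Ordinal (rot_proof b k).

Lemma dist_lt e i : dist e i < n.
Proof. rewrite /dist; have := ltn_ord e; have := ltn_ord i; case: (leqP e i) => *; lia. Qed.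

Lemma in_arc e f i : (i \in arc e f) = (dist e i <= dist e f).
Proof.
rewrite inE /dist; have := ltn_ord e; have := ltn_ord i; have := ltn_ord f.
by case: (leqP e f); case: (leqP e i); case: (leqP i f) => *; apply/idP/idP; lia.
Qed.

Lemma rot_dist e i : rot e (dist e i) = i.
Proof.
apply: val_inj => /=; rewrite /dist; have := ltn_ord e; have := ltn_ord i.
case: (leqP e i) => H1 H2 H3.
  by rewrite subnKC // modn_small.
have -> : e + (i + n - e) = i + n by lia.
by rewrite modnDr modn_small.
Qed.

Lemma dist_rot e k : k < n -> dist e (rot e k) = k.
Proof.
move=> kn; rewrite /dist /=; have := ltn_ord e.
case: (ltnP (e + k) n) => H1 H2.
  by rewrite modn_small //; case: leqP => *; lia.
have -> : e + k = (e + k - n) + n by lia.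
rewrite modnDr modn_small; last by lia.
case: leqP => *; lia.
Qed.

Lemma rot_rot b a k : rot (rot b a) k = rot b (a + k).
Proof. by apply: val_inj => /=; rewrite modnDml addnA. Qed.

Lemma rot_n b k : rot b (k + n) = rot b k.
Proof. by apply: val_inj => /=; rewrite addnA modnDr. Qed.

Lemma rot0 b : rot b 0 = b.
Proof. by apply: val_inj => /=; rewrite addn0 modn_small. Qed.

Lemma sum_arc_rot e f (F : 'I_n -> nat) :
  \sum_(i in arc e f) F i = \sum_(0 <= k < (dist e f).+1) F (rot e k).
Proof.
have bij : bijective (fun k : 'I_n => rot e k).
  exists (fun i => Ordinal (dist_lt e i)).
    by move=> k; apply: val_inj => /=; rewrite dist_rot.
  by move=> i; rewrite /= rot_dist.
rewrite (reindex (fun k : 'I_n => rot e k)) /=; last by apply: onW_bij.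
rewrite (eq_bigl (fun k : 'I_n => k <= dist e f)); last first.
  by move=> k; rewrite in_arc dist_rot.

rewrite -(big_mkord (fun k => k <= dist e f) (fun k => F (rot e k))).
rewrite (big_nat_widen _ _ _ _ _ (dist_lt e f)).
by apply: eq_bigl => k; rewrite ltnS.
Qed.

End Cyc.


Section Lin.
Variable n : nat.

Definition sm (b : 'I_n) (X : 'I_n -> nat) i j := \sum_(i <= k < j) X (rot b k).

Lemma sm_split b X i m j : i <= m -> m <= j -> sm b X i j = sm b X i m + sm b X m j.
Proof. by move=> H1 H2; rewrite /sm (big_cat_nat H1 H2). Qed.

Lemma sm1 b X i : sm b X i i.+1 = X (rot b i).
Proof. by rewrite /sm big_nat1. Qed.

Lemma sm0 b X i : sm b X i i = 0.
Proof. by rewrite /sm big_geq. Qed.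

Lemma smS b X i j : i <= j -> sm b X i j.+1 = sm b X i j + X (rot b j).
Proof. by move=> H; rewrite (@sm_split b X i j j.+1) // sm1. Qed.

Lemma sm_shift b a X i j : sm (rot b a) X i j = sm b X (a + i) (a + j).
Proof.
rewrite /sm; case: (leqP i j) => H; last first.
  by rewrite !big_geq //; lia.
rewrite [in RHS]addnC [X in _ = \sum_(_ <= _ < X) _]addnC big_addn.
have -> : j + a - a = j by lia.
by apply: eq_bigr => k _; rewrite rot_rot addnC.
Qed.

Lemma sm_per b X i j : sm b X (i + n) (j + n) = sm b X i j.
Proof.
rewrite /sm big_addn; have -> : j + n - n = j by lia.
by apply: eq_bigr => k _; rewrite rot_n.
Qed.

Lemma sm_arc b a c X : a <= c -> c < a + n ->
  \sum_(i in arc (rot b a) (rot b c)) X i = sm b X a c.+1.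
Proof.
move=> H1 H2; rewrite sum_arc_rot.
have -> : rot b c = rot (rot b a) (c - a) by rewrite rot_rot; congr rot; lia.
rewrite dist_rot; last by lia.
have := sm_shift b a X 0 (c - a).+1; rewrite /sm => ->; congr bigop; congr index_iota; lia.
Qed.

Lemma sm_total b X : sm b X 0 n = \sum_i X i.
Proof.
have n0 : 0 < n by exact: leq_ltn_trans (leq0n b) (ltn_ord b).
have := @sm_arc b 0 n.-1 X (leq0n _); rewrite add0n prednK // => <-; last by lia.
apply: eq_bigl => i; rewrite in_arc rot0 dist_rot; last by lia.
by have := dist_lt b i; lia.
Qed.

Lemma card_arc (e f : 'I_n) : #|arc e f| = (dist e f).+1.
Proof.
rewrite -sum1_card sum_arc_rot /= big_const_nat iter_addn; lia.
Qed.

End Lin.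


Section Core.
Variables (n : nat) (l : 'I_n -> bool) (w : 'I_n -> nat) (al be : nat).

Definition fN (i : 'I_n) : nat := l i.
Definition fE (i : 'I_n) : nat := ~~ l i.
Definition gN (i : 'I_n) : nat := if l i then w i else 0.
Definition gE (i : 'I_n) : nat := if l i then 0 else w i.

Definition hit (u : 'I_n) k := l (rot u k) && (sm u fN 0 k.+1 == sm u gE 0 k.+1).
Definition L (u : 'I_n) := find (hit u) (iota 0 n).

Lemma L_le u : L u <= n.
Proof. by have := find_size (hit u) (iota 0 n); rewrite size_iota. Qed.

Lemma L_hit u : L u < n -> hit u (L u).
Proof.
move=> H; have := @nth_find _ 0 (hit u) (iota 0 n).
rewrite has_find size_iota => /(_ H); by rewrite nth_iota.
Qed.

Lemma L_min u k : k < L u -> ~~ hit u k.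
Proof.
move=> H; have := @before_find _ 0 (hit u) (iota 0 n) k H.
by rewrite nth_iota ?add0n => [->|]; last by have := L_le u; lia.
Qed.

Lemma L_first u k : k < n -> hit u k -> L u <= k.
Proof. by move=> kn hk; rewrite leqNgt; apply/negP => /L_min; rewrite hk. Qed.

Lemma fNE x : fN x = l x. Proof. by []. Qed.
Lemma fEE x : fE x = ~~ l x. Proof. by []. Qed.
Lemma gNE x : gN x = if l x then w x else 0. Proof. by []. Qed.
Lemma gEE x : gE x = if l x then 0 else w x. Proof. by []. Qed.

Section PosE.
Variable u : 'I_n.
Hypothesis uE : ~~ l u.
Hypothesis uw : 0 < w u.

Lemma NEG k : k < L u -> sm u fN 0 k.+1 < sm u gE 0 k.+1.
Proof.
elim: k => [|k IH] H.
  by rewrite !sm1 rot0 fNE gEE (negbTE uE).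
have := IH (ltnW H); have := L_min H; rewrite /hit.
rewrite !(smS _ _ (leq0n k.+1)) (fNE (rot u k.+1)) (gEE (rot u k.+1)).
case: (l (rot u k.+1)) => /=; last by lia.
move=> /eqP; lia.
Qed.

Lemma LEQ k : k <= L u -> k < n -> sm u fN 0 k.+1 <= sm u gE 0 k.+1.
Proof.
move=> H kn; case: (ltngtP k (L u)) H => // H _; first exact: ltnW (NEG H).
have kn' : L u < n by rewrite -H.
by have := L_hit kn'; rewrite -H /hit => /andP [_ /eqP ->].
Qed.

Lemma IVT m : 0 < m -> m <= n -> sm u gE 0 m < sm u fN 0 m -> (L u).+2 <= m.
Proof.
case: m => // k _ kn H; rewrite ltnS ltnNge; apply/negP => Hk.
by have := LEQ Hk kn; lia.
Qed.

End PosE.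

Definition cand (u v : 'I_n) := l v && (\sum_(i in arc u v) fN i == \sum_(i in arc u v) gE i).

Lemma arc_sm (u v : 'I_n) X : \sum_(i in arc u v) X i = sm u X 0 (dist u v).+1.
Proof. by rewrite sum_arc_rot. Qed.

Lemma cand_hit (u v : 'I_n) : cand u v = hit u (dist u v).
Proof. by rewrite /cand /hit rot_dist !arc_sm. Qed.

Hypothesis Hcomp : forall u v, ~~ l u -> l v -> 0 < w u * w v ->
  exists2 e, e \in arc u v &
   (l e /\ e != v /\ \sum_(i in arc u e) fN i = \sum_(i in arc u e) gE i) \/
   (~~ l e /\ e != u /\ \sum_(i in arc e v) fE i = \sum_(i in arc e v) gN i).

Hypothesis Hcov : forall v, l v -> 0 < w v -> exists2 u, ~~ l u && (0 < w u) &
   (exists v0, [/\ cand u v0, (forall v', cand u v' -> #|arc u v0| <= #|arc u v'|) & v \in arc u v0])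
   \/ (forall v', ~~ cand u v').

Lemma cover_lin (v : 'I_n) : l v -> 0 < w v -> exists2 u, ~~ l u && (0 < w u) &
  (L u < n /\ dist u v <= L u) \/ L u = n.
Proof.
move=> lv wv; case: (Hcov lv wv) => u Hu [[v0 [c0 m0 inv]]|nc]; exists u => //.
  have hv0 : hit u (dist u v0) by rewrite -cand_hit.
  have Lle : L u <= dist u v0 by apply: L_first => //; exact: dist_lt.
  have Ln : L u < n by have := dist_lt u v0; lia.
  left; split => //.
  have hL := L_hit Ln.
  have cL : cand u (rot u (L u)) by rewrite cand_hit dist_rot.
  have := m0 _ cL; rewrite !card_arc dist_rot // => H.
  by move: inv; rewrite in_arc; lia.
right; have := L_le u; rewrite leq_eqVlt => /orP [/eqP //|Ln].
have hL := L_hit Ln.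
have := nc (rot u (L u)); by rewrite cand_hit dist_rot // hL.
Qed.

Lemma compat_lin (u v : 'I_n) : ~~ l u -> l v -> 0 < w u -> 0 < w v ->
 (exists2 k, k < dist u v & hit u k) \/
 (exists k, [/\ 0 < k, k <= dist u v, ~~ l (rot u k) &
     sm u fE k (dist u v).+1 = sm u gN k (dist u v).+1]).
Proof.
move=> lu lv wu wv; have : 0 < w u * w v by rewrite muln_gt0 wu wv.
case/(Hcomp lu lv) => e; rewrite in_arc => ein [[le [nev eqs]]|[le [neu eqs]]].
  left; exists (dist u e).
    rewrite ltn_neqAle ein andbT; apply: contra nev => /eqP H.
    by rewrite -(rot_dist u e) H rot_dist.
  by rewrite -cand_hit /cand le eqs eqxx.
right; exists (dist u e); split => //.
- rewrite lt0n; apply: contra neu => /eqP H.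
  by rewrite -(rot_dist u e) H rot0.
- by rewrite rot_dist.
have Hlt : dist u v < dist u e + n by have := dist_lt u v; lia.
have h1 := @sm_arc n u (dist u e) (dist u v) fE ein Hlt.
have h2 := @sm_arc n u (dist u e) (dist u v) gN ein Hlt.
rewrite !rot_dist in h1 h2.
by rewrite -h1 -h2.
Qed.

Lemma HL b a j : (forall c, a < c -> c < j -> l (rot b c) -> 0 < w (rot b c) ->
   exists b', [/\ a < b', b' <= c & sm b fE b' c.+1 = sm b gN b' c.+1]) ->
  forall t, a < t -> t <= j -> sm b gN a.+1 t <= sm b fE a.+1 t.
Proof.
move=> H; elim/ltn_ind => t IH hat tj.
have [ta|ta] : t = a.+1 \/ a.+1 < t by lia.
  by rewrite ta !sm0.
  have -> : t = t.-1.+1 by lia.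
  rewrite !(smS _ _ (_ : a.+1 <= t.-1)); try lia.
  have c1 : a < t.-1 by lia.
  have c2 : t.-1 < j by lia.
  case E: (l (rot b t.-1) && (0 < w (rot b t.-1))).
    case/andP: E => E1 E2; case: (H _ c1 c2 E1 E2) => b' [ab bc eq].
    have := IH b' (ltac:(lia)) ab (ltac:(lia)).
    rewrite (@sm_split _ b gN a.+1 b' t.-1) ?(@sm_split _ b fE a.+1 b' t.-1); try lia.

    move: eq; rewrite !(smS _ _ (_ : b' <= t.-1)); try lia.
  have := IH t.-1 (ltac:(lia)) c1 (ltac:(lia)).
  rewrite gNE fEE; move: E; case: (l _) => /=; first by move/negbT; rewrite -leqNgt leqn0 => /eqP ->; lia.
  lia.
Qed.

Hypothesis Hchr : forall e f, ~~ l e -> l f ->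
  be * \sum_(i in arc e f) fE i < be + al * \sum_(i in arc e f) fN i.

Section Main.
Variable s : 'I_n.
Hypothesis Hs : ~~ l s && (0 < w s).
Hypothesis Hmax : forall u, ~~ l u && (0 < w u) -> L u <= L s.
Hypothesis HLs : L s < n.

Lemma NEST a : 0 < a -> a < n -> ~~ l (rot s a) -> 0 < w (rot s a) ->
  (forall t, a < t -> t <= n -> sm s fN a t < sm s gE a t) -> False.
Proof.
move=> a0 an la wa H.
have Pu : ~~ l (rot s a) && (0 < w (rot s a)) by rewrite la wa.
have Lu := Hmax Pu.
have Lun : L (rot s a) < n by lia.
have := L_hit Lun; rewrite /hit => /andP [_ /eqP].
rewrite !sm_shift addn0; set k := L (rot s a) => Heq.
have kge : n - a <= k.
  rewrite leqNgt; apply/negP => kl.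
  by have := H (a + k.+1) (ltac:(lia)) (ltac:(lia)); rewrite Heq ltnn.
have Hn := H n an (leqnn n).
move: Heq; rewrite (@sm_split _ s fN a n (a + k.+1)) ?(@sm_split _ s gE a n (a + k.+1)); try lia.
have -> : a + k.+1 = (a + k.+1 - n) + n by lia.
have P1 := sm_per s fN 0 (a + k.+1 - n); have P2 := sm_per s gE 0 (a + k.+1 - n); rewrite add0n in P1 P2; rewrite P1 P2 => Heq.
have Hm : sm s gE 0 (a + k.+1 - n) < sm s fN 0 (a + k.+1 - n) by lia.
case/andP: Hs => sE sw.
have m0 : 0 < a + k.+1 - n by lia.
have m1 : a + k.+1 - n <= n by lia.
have := IVT sE sw m0 m1 Hm.
have := Hmax Pu; rewrite -/k.
lia.
Qed.

Lemma Rpp c : c < n -> l (rot s c) -> 0 < w (rot s c) -> exists av, [/\ av <= c,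
  (forall t, av <= t -> t < c -> sm s fN av t.+1 < sm s gE av t.+1),
  sm s fN av c.+1 <= sm s gE av c.+1 &
  exists b, [/\ av < b, b <= c & sm s fE b c.+1 = sm s gN b c.+1]].
Proof.
move=> cn lc wc; case: (cover_lin lc wc) => u Pu [[Lun dle]|Lun]; last first.
  by have := Hmax Pu; lia.
have Lus := Hmax Pu.
case/andP: (Pu) => uE uw.
have Eu : u = rot s (dist s u) by rewrite rot_dist.
move: Eu dle; set a := dist s u => Eu dle.
have an : a < n by exact: dist_lt.
have shu : forall X i j, sm u X i j = sm s X (a + i) (a + j).
  by move=> X i j; rewrite {1}Eu sm_shift.
case: (leqP a c) => ac.
  have Ev : rot s c = rot u (c - a) by rewrite Eu rot_rot; congr rot; lia.
  have Hd : dist u (rot s c) = c - a by rewrite Ev dist_rot; lia.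
  rewrite Hd in dle.
  exists a; split => //.
  - move=> t at1 tc; have h : t - a < L u by lia.
    have := NEG uE uw h; rewrite !shu.
    have -> : a + (t - a).+1 = t.+1 by lia.
    by rewrite addn0.
  - have h : c - a < n by lia.
    have := LEQ uE uw dle h; rewrite !shu.
    have -> : a + (c - a).+1 = c.+1 by lia.
    by rewrite addn0.
  case: (compat_lin uE lc uw wc); rewrite Hd.
    case=> k kl hk; have h : k < L u by lia.
    by have := L_min h; rewrite hk.
  case=> k [k0 kl lk eqk]; exists (a + k); split; try lia.
  by move: eqk; rewrite !shu; have -> : a + (c - a).+1 = c.+1 by lia.
have Ev : rot s c = rot u (c + n - a).
  rewrite Eu rot_rot; have -> : a + (c + n - a) = c + n by lia.
  by rewrite rot_n.
have Hd : dist u (rot s c) = c + n - a by rewrite Ev dist_rot; lia.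
rewrite Hd in dle; exfalso.
apply: (@NEST a); try lia.
- by rewrite -Eu.
- by rewrite -Eu.
move=> t at1 tn; have h : t - a - 1 < L u by lia.
have := NEG uE uw h; rewrite !shu addn0.
have -> : a + (t - a - 1).+1 = t by lia.
by [].
Qed.

Definition freeb j := all (fun a => sm s gE a j <= sm s fN a j) (iota 0 j.+1).

Lemma freeP j a : freeb j -> a <= j -> sm s gE a j <= sm s fN a j.
Proof. by move=> /allP H aj; apply: H; rewrite mem_iota; lia. Qed.

Lemma notfree j : ~~ freeb j -> exists a, a < j /\ sm s fN a j < sm s gE a j.
Proof.
case/allPn => a; rewrite mem_iota -ltnNge => H1 H2; exists a; split => //.
case: (ltngtP a j) H1 H2 => // [|<-]; first lia.
by rewrite !sm0.
Qed.

Lemma free0 : freeb 0.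
Proof. by rewrite /freeb /= !sm0. Qed.

Lemma Hnfree : freeb n.
Proof.
apply/allP => a; rewrite mem_iota add0n ltnS => /andP [_].
suff: forall m a, n - a <= m -> a <= n -> sm s gE a n <= sm s fN a n.
  by move=> H; apply: (H (n - a)).
clear a; elim=> [|m IH] a Hm an.
  have -> : a = n by lia.
  by rewrite !sm0.
have [Hm'|Hm'] : n - a <= m \/ n - a = m.+1 by lia.
  exact: IH.
rewrite leqNgt; apply/negP => H.
have Ht : forall t, a < t -> t <= n -> sm s fN a t < sm s gE a t.
  move=> t at1 tn; have := IH t (ltac:(lia)) tn.
  move: H; rewrite (@sm_split _ s fN a t n) ?(@sm_split _ s gE a t n); lia.
case: (posnP a) => [a0|a0].
  subst a; have := Ht (L s).+1 (ltac:(lia)) HLs.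
  by have := L_hit HLs; rewrite /hit => /andP [_ /eqP ->]; rewrite ltnn.
have := Ht a.+1 (ltac:(lia)) (ltac:(lia)); rewrite !sm1 fNE gEE.
case E: (l (rot s a)) => //= wa.
by apply: (@NEST a) => //; [lia| rewrite E].
Qed.

Lemma LF j : 0 < j -> exists a, [/\ a < j, freeb a & forall a', a < a' -> a' < j -> ~~ freeb a'].
Proof.
elim: j => // j IH _; case: (posnP j) => [->|j0].
  by exists 0; split => //; [exact: free0 | lia].
case: (boolP (freeb j)) => Fj.
  by exists j; split => // a' H1 H2; lia.
case: (IH j0) => a [aj Fa Ha]; exists a; split => //; first lia.
move=> a' H1 H2; case: (ltngtP a' j) => [H3|H3|->] //; [exact: Ha | lia].
Qed.

Lemma Claim j : j <= n -> freeb j ->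
  be * sm s gN 0 j <= al * sm s gE 0 j /\ (0 < j -> be * sm s gN 0 j < al * sm s gE 0 j).
Proof.
elim/ltn_ind: j => j IH jn Fj.
case: (posnP j) => [->|j0]; first by rewrite !sm0 !muln0.
suff H : be * sm s gN 0 j < al * sm s gE 0 j.
  by split => [|_ //]; exact: ltnW.
case: (LF j0) => a [aj Fa Ha].
have IHa := IH a aj (ltac:(lia)) Fa.
have [ja|ja] : j = a.+1 \/ a.+1 < j by lia.
  subst j.
  rewrite !(smS _ _ (leq0n a)).
  case: (posnP (w (rot s a))) => w0.
    have -> : gN (rot s a) = 0 by rewrite gNE w0; case: (l _).
    have -> : gE (rot s a) = 0 by rewrite gEE w0; case: (l _).
    rewrite !addn0.
    case: (posnP a) => [a0|a0]; last by case: IHa => _ /(_ a0).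
    subst a; move: Hs w0; rewrite rot0 => /andP [_]; lia.
  case E1: (l (rot s a)).
    have an : a < n by lia.
    case: (Rpp an E1 w0) => av [ava _ hle _].
    have := freeP Fa ava; move: hle; rewrite !(smS _ _ ava) fNE gEE E1 /=; lia.
  have := freeP Fj (leqnSn a); rewrite !sm1 fNE gEE E1 /=; lia.
have neg : forall t, a < t -> t < j -> sm s fN a t < sm s gE a t.
  elim/ltn_ind => t IHt at1 tj.
  case: (notfree (Ha t at1 tj)) => a' [a't Ha'].
  case: (leqP a' a) => a'a.
    have := freeP Fa a'a; move: Ha'.
    rewrite (@sm_split _ s fN a' a t) ?(@sm_split _ s gE a' a t); lia.
  have := IHt a' a't a'a (ltac:(lia)); move: Ha'.
  rewrite (@sm_split _ s fN a a' t) ?(@sm_split _ s gE a a' t); lia.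
have hj := freeP Fj (ltnW (ltnW ja)).
have hj1 := neg j.-1 (ltac:(lia)) (ltac:(lia)).
have ej : j = j.-1.+1 by lia.
move: hj; rewrite ej !(smS _ _ (_ : a <= j.-1)); try lia.
rewrite fNE gEE; case Elj: (l (rot s j.-1)) => /=; last by lia.
rewrite -ej => hj.
have eqNj : sm s fN a j = sm s gE a j.
  rewrite ej !(smS _ _ (_ : a <= j.-1)) ?fNE ?gEE ?Elj /=; lia.
have ha1 := neg a.+1 (ltnSn a) ja.
move: ha1; rewrite !sm1 fNE gEE; case Ela: (l (rot s a)) => //= wa.
have HLa : sm s gN a.+1 j <= sm s fE a.+1 j.
  apply: (@HL s a j) => //.
  move=> c ac cj lc wc.
  have cn : c < n by lia.
  case: (Rpp cn lc wc) => av [avc Hneg _ [b [avb bc eqb]]].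
  exists b; split => //.
  rewrite ltnNge; apply/negP => ba.
  have Hava : av < a by lia.
  have := Hneg a.-1 (ltac:(lia)) (ltac:(lia)).
  have -> : a.-1.+1 = a by lia.
  have := freeP Fa (ltnW Hava); lia.
have Hc := @Hchr (rot s a) (rot s j.-1) (negbT Ela) Elj.
rewrite !sm_arc in Hc; try lia.
rewrite -ej in Hc.
move: Hc HLa IHa eqNj.
rewrite (@sm_split _ s gN 0 a j) ?(@sm_split _ s gE 0 a j); try lia.
rewrite (@sm_split _ s gN a a.+1 j) ?(@sm_split _ s fE a a.+1 j); try lia.
rewrite !sm1 gNE fEE Ela /=.
move=> Hc HLa [IHa _] eqNj.
nia.
Qed.

End Main.

Hypothesis Hal : \sum_i fE i = al.
Hypothesis Hbe : \sum_i fN i = be.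
Hypothesis Hnz : 0 < \sum_i gN i + \sum_i gE i.

Theorem core : be * \sum_i gN i < al * \sum_i gE i.
Proof.
have ex_pos : forall F : 'I_n -> nat, 0 < \sum_i F i -> exists i, 0 < F i.
  move=> F; case: (boolP [exists i, 0 < F i]) => [/existsP //|/existsPn H0].
  by rewrite big1 // => i _; move: (H0 i); rewrite lt0n negbK => /eqP.
have [u0 Hu0] : exists u0, ~~ l u0 && (0 < w u0).
  case: (posnP (\sum_i gE i)) => [q0|qpos].
    move: Hnz; rewrite q0 addn0 => /ex_pos [v]; rewrite gNE.
    by case E: (l v) => // wv; case: (Hcov E wv) => u Pu _; exists u.
  case: (ex_pos _ qpos) => u; rewrite gEE; case E: (l u) => // wu.
  by exists u; rewrite E.
have [s Hs Hmax] := @arg_maxnP _ u0 (fun u => ~~ l u && (0 < w u)) L Hu0.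
have n0 : 0 < n by exact: leq_ltn_trans (leq0n s) (ltn_ord s).
case: (ltngtP (L s) n) => [HLs|HLs|HLs].
- have := Claim Hs Hmax HLs (leqnn n) (Hnfree Hs Hmax HLs).
  by case=> _ /(_ n0); rewrite !sm_total.
- by have := L_le s; lia.
case/andP: (Hs) => sE sw.
have q1 : be < \sum_i gE i.
  have h : n.-1 < L s by lia.
  have := NEG sE sw h; rewrite prednK // !sm_total Hbe //.
have p1 : sm s gN 1 n <= sm s fE 1 n.
  apply: (@HL s 0 n) => // c c0 cn lc wc.
  case: (compat_lin sE lc sw wc); rewrite dist_rot //.
    case=> k kc hk; have := L_first (ltn_trans kc cn) hk; lia.
  by case=> k [k0 kc _ eqk]; exists k; split.
have Hal' := Hal.
move: p1; rewrite -(sm_total s gN) -(sm_total s fE) in Hal' q1 *.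
rewrite (@sm_split _ s gN 0 1 n) ?(@sm_split _ s fE 0 1 n) // in Hal' *.
rewrite !sm1 rot0 gNE fEE (negbTE sE) /= in Hal' *.
move=> p1; rewrite add0n.
set p := sm s gN 1 n in p1 *; set q := \sum_(i < n) gE i in q1 *.
have h1 : be * p <= be * (al - 1) by apply: leq_mul => //; lia.
have h2 : al * be.+1 <= al * q by apply: leq_mul.
have h3 : be * (al - 1) < al * be.+1.
  rewrite mulnBr muln1 mulnS mulnC; lia.
lia.
Qed.

End Core.


Section Walk.
Variables d1 d2 : nat.

Definition cpre (s : seq bool) k := \sum_(0 <= i < k) nth false s i.

Lemma cpre_cons b s k : cpre (b :: s) k.+1 = b + cpre s k.
Proof. by rewrite /cpre big_nat_recl. Qed.

Lemma cpre0 s : cpre s 0 = 0.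
Proof. by rewrite /cpre big_geq. Qed.

Definition Inv X Y := [/\ Y <= d2, Y * d1 <= X * d2 & X * d2 < Y * d1 + d1 + d2].

Lemma size_walk f x y : size (walk d1 d2 f x y) = f.
Proof. by elim: f x y => //= f IH x y; case: ifP => _ /=; rewrite IH. Qed.

Lemma walk_inv f x y : x + y + f = d1 + d2 -> Inv x y ->
  forall k, k <= f ->
  let s := walk d1 d2 f x y in
  let Y := y + cpre s k in let X := x + k - cpre s k in
  Inv X Y /\ (k < f -> if nth false s k then (Y + 1) * d1 <= X * d2
                       else X * d2 < (Y + 1) * d1).
Proof.
elim: f x y => [|f IH] x y Hs Hi k kf.
  have -> : k = 0 by lia.
  by rewrite /= cpre0 addn0 subn0 addn0.
have Hw : walk d1 d2 f.+1 x y = if (y < d2) && (y.+1 * d1 <= x * d2)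
   then true :: walk d1 d2 f x y.+1 else false :: walk d1 d2 f x.+1 y by [].
rewrite Hw /=; case H: (_ && _).
  case/andP: H => H1 H2.
  case: k kf => [|k] kf.
    rewrite cpre0 addn0 subn0 addn0; split => // _ /=.
    by rewrite addn1.
  have Hi' : Inv x y.+1.
    case: Hi => a b c; split; lia.
  have := IH x y.+1 (ltac:(lia)) Hi' k (ltac:(lia)).
  rewrite cpre_cons /=.
  have -> : x + k.+1 - (1 + cpre (walk d1 d2 f x y.+1) k) = x + k - cpre (walk d1 d2 f x y.+1) k by lia.
  by have -> : y + (1 + cpre (walk d1 d2 f x y.+1) k) = y.+1 + cpre (walk d1 d2 f x y.+1) k by lia.
have HE : x * d2 < (y + 1) * d1.
  case: Hi => a b c.
  move/negbT: H; rewrite negb_and -!ltnNge => /orP [H|H]; last by rewrite addn1.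
  have yd : y = d2 by lia.
  subst y; have xd : x < d1 by lia.
  have : x * d2 <= (d1 - 1) * d2 by apply: leq_mul; lia.
  nia.
case: k kf => [|k] kf.
  by rewrite cpre0 addn0 subn0 addn0; split => // _ /=.
have Hi' : Inv x.+1 y.
  case: Hi => a b c; split => //; first by lia.
  nia.
have := IH x.+1 y (ltac:(lia)) Hi' k (ltac:(lia)).
rewrite cpre_cons /= add0n.
by have -> : x + k.+1 - cpre (walk d1 d2 f x.+1 y) k = x.+1 + k - cpre (walk d1 d2 f x.+1 y) k by lia.
Qed.

End Walk.

Lemma smEN n (l : 'I_n -> bool) b i j : i <= j -> sm b (fE l) i j + sm b (fN l) i j = j - i.
Proof.
move=> ij; rewrite /sm -big_split /=.
rewrite (eq_bigr (fun _ => 1)); last by move=> k _; rewrite fEE fNE; case: (l _).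
by rewrite big_const_nat iter_addn; lia.
Qed.

Lemma arith_wrap d1 d2 Xe Ye Xf Yf E1 N1 : Ye * d1 <= Xe * d2 -> Xe * d2 < (Ye + 1) * d1 ->
  (Yf + 1) * d1 <= Xf * d2 -> Xf * d2 < Yf * d1 + d1 + d2 -> Xe + E1 = d1 -> Ye + N1 = d2 ->
  d2 * (E1 + Xf) < d2 + d1 * (N1 + (Yf + 1)) /\ d1 * (N1 + (Yf + 1)) < d1 + d2 * (E1 + Xf).
Proof.
move=> h1 h2 h3 h4 h5 h6.
have k1 : d2 * Xe + d2 * E1 = d2 * d1 by rewrite -mulnDr h5.
have k2 : d1 * Ye + d1 * N1 = d1 * d2 by rewrite -mulnDr h6.
rewrite !mulnDr; split; lia.
Qed.

Section Chr.
Variables d1 d2 : nat.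
Local Notation P := (dyck_path d1 d2).
Local Notation nn := (d1 + d2).

Lemma pre k : 0 < nn -> k <= nn -> Inv d1 d2 (k - cpre P k) (cpre P k) /\
  (k < nn -> if nth false P k then (cpre P k + 1) * d1 <= (k - cpre P k) * d2
             else (k - cpre P k) * d2 < (cpre P k + 1) * d1).
Proof.
move=> n0 kn; have := @walk_inv d1 d2 nn 0 0 (ltac:(lia)) (ltac:(rewrite /Inv; split; lia)) k kn.
by rewrite /= !add0n.
Qed.

Lemma cpreS s k : cpre s k.+1 = cpre s k + nth false s k.
Proof. by rewrite /cpre big_nat_recr. Qed.

Lemma cpre_le s k : cpre s k <= k.
Proof.
elim: k => [|k IH]; first by rewrite cpre0.
by rewrite cpreS; case: (nth _ _ _); lia.
Qed.

Lemma cpre_total : 0 < nn -> cpre P nn = d2.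
Proof.
move=> n0; case: (pre n0 (leqnn nn)) => [[H1 H2 H3] _].
have := cpre_le P nn.
set Y := cpre P nn in H1 H2 H3 *.
move=> HY.
case: (ltngtP Y d2) => // HY2; last by lia.
exfalso.
have h1 : (d1 + 1) * d2 <= (nn - Y) * d2 by apply: leq_mul; lia.
have h2 : Y * d1 <= (d2 - 1) * d1 by apply: leq_mul; lia.
nia.
Qed.

Lemma sm0_cpre (b : 'I_nn) k : val b = 0 -> k <= nn -> sm b (fN (@isN d1 d2)) 0 k = cpre P k.
Proof.
move=> b0 kn; rewrite /sm /cpre; apply: eq_big_nat => i /andP [_ ik].
by rewrite fNE /isN /= b0 add0n modn_small //; lia.
Qed.

Lemma chr_both (e f : 'I_nn) : ~~ @isN d1 d2 e -> isN f ->
  let E := \sum_(i in arc e f) fE (@isN d1 d2) i in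
  let N := \sum_(i in arc e f) fN (@isN d1 d2) i in
  d2 * E < d2 + d1 * N /\ d1 * N < d1 + d2 * E.
Proof.
move=> le lf /=.
have n0 : 0 < nn by exact: leq_ltn_trans (leq0n e) (ltn_ord e).
pose b0 : 'I_nn := Ordinal n0.
have rb : forall k : 'I_nn, rot b0 k = k.
  by move=> k; apply: val_inj; rewrite /= add0n modn_small.
have Yk : forall k, k <= nn -> sm b0 (fN (@isN d1 d2)) 0 k = cpre P k.
  by move=> k; apply: sm0_cpre.
have Xk : forall k, k <= nn -> sm b0 (fE (@isN d1 d2)) 0 k = k - cpre P k.
  move=> k kn; have := smEN (@isN d1 d2) b0 (leq0n k); rewrite Yk //; lia.
have [[Ie1 Ie2 Ie3] Le] := pre n0 (ltnW (ltn_ord e)).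
have [[If1 If2 If3] Lf] := pre n0 (ltnW (ltn_ord f)).
move: (Le (ltn_ord e)) (Lf (ltn_ord f)).
have nthE : nth false P e = false by move: le; rewrite /isN => /negbTE.
have nthF : nth false P f = true by move: lf; rewrite /isN.
rewrite nthE nthF => Le' Lf'.
have Cf := cpreS P f; rewrite nthF in Cf.
have cfl := cpre_le P f.
have cel := cpre_le P e.
have arcE : forall X c, e <= c -> c < e + nn -> rot b0 c = f ->
    \sum_(i in arc e f) X i = sm b0 X e c.+1.
  by move=> X c h1 h2 h3; have := @sm_arc _ b0 e c X h1 h2; rewrite rb h3.
have y2 := Yk e (ltnW (ltn_ord e)); have x2 := Xk e (ltnW (ltn_ord e)).
have y1 := Yk f.+1 (ltn_ord f); have x1 := Xk f.+1 (ltn_ord f).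
have fn := ltn_ord f; have en := ltn_ord e.
case: (leqP e f) => ef.
  have c1 : f < e + nn by lia.
  rewrite !(arcE _ _ ef c1 (rb f)).
  have s1 := @sm_split _ b0 (fN (@isN d1 d2)) 0 e f.+1 (leq0n _) (leqW ef).
  have s2 := @sm_split _ b0 (fE (@isN d1 d2)) 0 e f.+1 (leq0n _) (leqW ef).
  split; nia.
have rf : rot b0 (f + nn) = f by rewrite rot_n rb.
have c1 : e <= f + nn by lia.
have c2 : f + nn < e + nn by lia.
rewrite !(arcE _ _ c1 c2 rf).
have sp : forall X, sm b0 X e (f + nn).+1 = sm b0 X e nn + sm b0 X 0 f.+1.
  move=> X; rewrite (@sm_split _ b0 X e nn (f + nn).+1); try lia.
  by rewrite -addSn; have := sm_per b0 X 0 f.+1; rewrite add0n => ->.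
rewrite !sp.
have y3 := Yk nn (leqnn nn); have x3 := Xk nn (leqnn nn).
rewrite (@sm_split _ b0 _ 0 e nn) in y3 x3; try lia.
rewrite cpre_total // in y3 x3.
rewrite y1 x1 Cf /=.
have -> : f.+1 - (cpre P f + 1) = f - cpre P f by lia.
have enn : e <= nn by lia. rewrite (@sm_split _ b0 (fE _) 0 e nn (leq0n _) enn) in x3.
apply: (@arith_wrap d1 d2 (e - cpre P e) (cpre P e)) => //; lia.
Qed.

End Chr.


Section Conv.
Variable n : nat.

Lemma sumI (A : {set 'I_n}) (P : pred 'I_n) F :
  \sum_(i in A :&: [set i | P i]) F i = \sum_(i in A) (if P i then F i else 0).
Proof.
rewrite big_mkcond [RHS]big_mkcond; apply: eq_bigr => i _.
by rewrite !inE; case: (i \in A); case: (P i).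
Qed.

Lemma cardI (A : {set 'I_n}) (P : pred 'I_n) :
  #|A :&: [set i | P i]| = \sum_(i in A) (P i : nat).
Proof. by rewrite -sum1_card sumI; apply: eq_bigr => i _; case: (P i). Qed.

Lemma rev_arc (a b i : 'I_n) : (rev_ord i \in arc (rev_ord b) (rev_ord a)) = (i \in arc a b).
Proof.
rewrite !inE /=; have := ltn_ord a; have := ltn_ord b; have := ltn_ord i.
case: (leqP a b); case: (leqP (n - b.+1) (n - a.+1)) => *; apply/idP/idP; lia.
Qed.

Lemma sum_rev (a b : 'I_n) (X : 'I_n -> nat) :
  \sum_(i in arc (rev_ord b) (rev_ord a)) X i = \sum_(i in arc a b) X (rev_ord i).
Proof.
rewrite (reindex (@rev_ord n)) /=; last by exists (@rev_ord n) => i _; rewrite rev_ordK.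
by apply: eq_bigl => i; rewrite rev_arc.
Qed.

Lemma card_rev (a b : 'I_n) : #|arc (rev_ord b) (rev_ord a)| = #|arc a b|.
Proof. by rewrite -!sum1_card sum_rev. Qed.

Lemma sum_rev_all (X : 'I_n -> nat) : \sum_i X (rev_ord i) = \sum_i X i.
Proof. by rewrite [RHS](reindex_inj rev_ord_inj). Qed.

Lemma wt0 (w : 'I_n -> nat) A v : wt w A = 0 -> v \in A -> w v = 0.
Proof. by move=> H vA; move: H; rewrite /wt (bigD1 v) //=; lia. Qed.

End Conv.

Section Parts.
Variables d1 d2 : nat.
Local Notation nn := (d1 + d2).
Local Notation l := (@isN d1 d2).

Lemma cNe (A : {set 'I_nn}) : #|A :&: PN d1 d2| = \sum_(i in A) fN l i.
Proof. by rewrite /PN cardI. Qed.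
Lemma cEe (A : {set 'I_nn}) : #|A :&: PE d1 d2| = \sum_(i in A) fE l i.
Proof. by rewrite /PE cardI. Qed.
Lemma wNe w (A : {set 'I_nn}) : wt w (A :&: PN d1 d2) = \sum_(i in A) gN l w i.
Proof. by rewrite /wt /PN sumI. Qed.
Lemma wEe w (A : {set 'I_nn}) : wt w (A :&: PE d1 d2) = \sum_(i in A) gE l w i.
Proof. by rewrite /wt /PE sumI; apply: eq_bigr => i _; rewrite gEE; case: (l i). Qed.
Lemma totN w : wt w (PN d1 d2) = \sum_i gN l w i.
Proof. by rewrite /wt big_mkcond; apply: eq_bigr => i _; rewrite inE gNE. Qed.
Lemma totE w : wt w (PE d1 d2) = \sum_i gE l w i.
Proof. by rewrite /wt big_mkcond; apply: eq_bigr => i _; rewrite inE gEE; case: (l i). Qed.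

Lemma candE w u v : cand l w u v = shE_cand w u v.
Proof. by rewrite /cand /shE_cand inE cNe wEe. Qed.
Lemma candNE w u v : cand (fun i => ~~ l (rev_ord i)) (fun i => w (rev_ord i)) (rev_ord v) (rev_ord u)
   = shN_cand w u v.
Proof.
rewrite /cand /shN_cand inE rev_ordK cEe wNe !sum_rev; congr (_ && (_ == _)).
  by apply: eq_bigr => i _; rewrite fNE fEE rev_ordK.
by apply: eq_bigr => i _; rewrite gEE gNE /= rev_ordK; case: (l i).
Qed.

Lemma exists_ord p q w : (p, q) != (0, 0) -> wt w (PN d1 d2) = p -> wt w (PE d1 d2) = q ->
  0 < nn.
Proof.
move=> pq Hp Hq; case: (pickP (fun _ : 'I_nn => true)) => [i0 _|H0].
  exact: leq_ltn_trans (leq0n i0) (ltn_ord i0).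
move: pq; rewrite -Hp -Hq /wt !big_pred0 // => i; by have := H0 i.
Qed.

Lemma totals : 0 < nn -> \sum_i fN l i = d2 /\ \sum_i fE l i = d1.
Proof.
move=> n0; pose b0 : 'I_nn := Ordinal n0.
have h1 : \sum_i fN l i = d2 by rewrite -(sm_total b0) sm0_cpre // cpre_total.
split => //.
have := smEN l b0 (leq0n nn); rewrite !sm_total h1; lia.
Qed.

End Parts.


Lemma minimal_ex (n : nat) (P : pred 'I_n) (F : 'I_n -> nat) x : P x ->
  exists2 y, P y & forall z, P z -> F y <= F z.
Proof. by move=> Px; case: (arg_minnP F Px) => y Py H; exists y. Qed.

Lemma part1 d1 d2 p q w : (p, q) != (0, 0) -> CG0plus d1 d2 p q w -> d2 * p < d1 * q.
Proof.
move=> pq [Hc Hp Hq Hsh].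
have n0 := exists_ord pq Hp Hq.
have [Hbe Hal] := totals n0.
have Hcomp : forall u v, ~~ isN u -> isN v -> 0 < w u * w v ->
  exists2 e, e \in arc u v &
   (isN e /\ e != v /\ \sum_(i in arc u e) fN (@isN d1 d2) i = \sum_(i in arc u e) gE (@isN d1 d2) w i) \/
   (~~ isN e /\ e != u /\ \sum_(i in arc e v) fE (@isN d1 d2) i = \sum_(i in arc e v) gN (@isN d1 d2) w i).
  move=> u v lu lv wuv.
  have uE : u \in PE d1 d2 by rewrite inE.
  have vN : v \in PN d1 d2 by rewrite inE.
  case: (Hc u v uE vN wuv) => e ein [[eN [nev H]]|[eE [neu H]]]; exists e => //.
    by left; rewrite inE in eN; rewrite -cNe -wEe.
  by right; rewrite inE in eE; rewrite -cEe -wNe.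
have Hcov : forall v, isN v -> 0 < w v -> exists2 u, ~~ isN u && (0 < w u) &
   (exists v0, [/\ cand (@isN d1 d2) w u v0, (forall v', cand (@isN d1 d2) w u v' -> #|arc u v0| <= #|arc u v'|) & v \in arc u v0])
   \/ (forall v', ~~ cand (@isN d1 d2) w u v').
  move=> v lv wv.
  have vin : v \in shset w (PE d1 d2).
    apply: contraT => nin.
    have : v \in PN d1 d2 :\: shset w (PE d1 d2) by rewrite !inE nin lv.
    by move/(wt0 Hsh); lia.
  case/bigcupP: vin => e eE; rewrite /sh; case: eqP => [_|w0]; first by rewrite inE.
  rewrite eE => ve; exists e; first by rewrite inE in eE; rewrite eE lt0n; apply/eqP.
  move: ve.
  case: (pickP (fun v => shE_cand w e v && [forall v', shE_cand w e v' ==> (#|arc e v| <= #|arc e v'|)]))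
    => [v0 /andP [c0 /forallP m0]|none] ve.
    left; exists v0; split.
    - by rewrite candE.
    - by move=> v' cv'; have := m0 v'; rewrite -candE cv' => /implyP; apply.
    - by move: ve; rewrite inE => /andP [].
  right => v'; apply/negP; rewrite candE => cv'.
  case: (minimal_ex (fun x => #|arc e x|) cv') => x cx mx.
  have := none x; rewrite cx /= => /negP; apply; apply/forallP => y.
  by apply/implyP => cy; exact: mx.
have Hchr : forall e f, ~~ isN e -> isN f ->
  d2 * \sum_(i in arc e f) fE (@isN d1 d2) i < d2 + d1 * \sum_(i in arc e f) fN (@isN d1 d2) i.
  by move=> e f le lf; have := chr_both le lf; rewrite /= => -[].
have Hnz : 0 < \sum_i gN (@isN d1 d2) w i + \sum_i gE (@isN d1 d2) w i.
  by rewrite -totN -totE Hp Hq; move: pq; case: p {Hp}; case: q {Hq}.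
have := core Hcomp Hcov Hchr Hal Hbe Hnz.
by rewrite -totN -totE Hp Hq.
Qed.

Section P2.
Variables (d1 d2 : nat) (w : 'I_(d1 + d2) -> nat).
Local Notation nn := (d1 + d2).
Local Notation l := (@isN d1 d2).
Local Notation l' := (fun i : 'I_nn => ~~ l (rev_ord i)).
Local Notation w' := (fun i : 'I_nn => w (rev_ord i)).

Lemma fE' j : fE l' (rev_ord j) = fN l j. Proof. by rewrite fEE fNE rev_ordK negbK. Qed.
Lemma fN' j : fN l' (rev_ord j) = fE l j. Proof. by rewrite fEE fNE rev_ordK. Qed.
Lemma gN' j : gN l' w' (rev_ord j) = gE l w j.
Proof. by rewrite gEE gNE rev_ordK; case: (l j). Qed.
Lemma gE' j : gE l' w' (rev_ord j) = gN l w j.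
Proof. by rewrite gEE gNE rev_ordK; case: (l j). Qed.

Lemma part2 p q : (p, q) != (0, 0) -> CG0minus d1 d2 p q w -> d1 * q < d2 * p.
Proof.
move=> pq [Hc Hp Hq Hsh].
have n0 := exists_ord pq Hp Hq.
have [Hbe Hal] := totals n0.
have tot : forall X : 'I_nn -> nat, \sum_i X i = \sum_i X (rev_ord i) by move=> X; rewrite sum_rev_all.
have Hal' : \sum_i fE l' i = d2 by rewrite tot; under eq_bigr do rewrite fE'.
have Hbe' : \sum_i fN l' i = d1 by rewrite tot; under eq_bigr do rewrite fN'.
have HgN : \sum_i gN l' w' i = q by rewrite tot -Hq totE; under eq_bigr do rewrite gN'.
have HgE : \sum_i gE l' w' i = p by rewrite tot -Hp totN; under eq_bigr do rewrite gE'.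
have Hcomp : forall u v, ~~ l' u -> l' v -> 0 < w' u * w' v ->
  exists2 e, e \in arc u v &
   (l' e /\ e != v /\ \sum_(i in arc u e) fN l' i = \sum_(i in arc u e) gE l' w' i) \/
   (~~ l' e /\ e != u /\ \sum_(i in arc e v) fE l' i = \sum_(i in arc e v) gN l' w' i).
  move=> u' v' lu' lv' wuv.
  set u := rev_ord v'; set v := rev_ord u'.
  have Eu : u' = rev_ord v by rewrite rev_ordK.
  have Ev : v' = rev_ord u by rewrite rev_ordK.
  have uE : u \in PE d1 d2 by rewrite inE.
  have vN : v \in PN d1 d2 by rewrite inE; move: lu'; rewrite negbK.
  have wuv' : 0 < w u * w v by rewrite mulnC.
  case: (Hc u v uE vN wuv') => e ein [[eN [nev H]]|[eE [neu H]]]; exists (rev_ord e).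
  - by rewrite Eu Ev rev_arc.
  - right; rewrite inE in eN; split; first by rewrite rev_ordK negbK.
    split; first by rewrite Eu (inj_eq rev_ord_inj).
    rewrite Ev !sum_rev; move: H; rewrite cNe wEe => H.
    by under eq_bigr do rewrite fE'; under [RHS]eq_bigr do rewrite gN'.
  - by rewrite Eu Ev rev_arc.
  left; rewrite inE in eE; split; first by rewrite rev_ordK.
  split; first by rewrite Ev (inj_eq rev_ord_inj).
  rewrite Eu !sum_rev; move: H; rewrite cEe wNe => H.
  by under eq_bigr do rewrite fN'; under [RHS]eq_bigr do rewrite gE'.
have Hcov : forall v, l' v -> 0 < w' v -> exists2 u, ~~ l' u && (0 < w' u) &
   (exists v0, [/\ cand l' w' u v0, (forall v', cand l' w' u v' -> #|arc u v0| <= #|arc u v'|) & v \in arc u v0])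
   \/ (forall v', ~~ cand l' w' u v').
  move=> v' lv' wv'; set v := rev_ord v'.
  have Ev : v' = rev_ord v by rewrite rev_ordK.
  have vin : v \in shset w (PN d1 d2).
    apply: contraT => nin.
    have : v \in PE d1 d2 :\: shset w (PN d1 d2) by rewrite !inE nin lv'.
    by move/(wt0 Hsh); rewrite /v; lia.
  case/bigcupP: vin => f fN; rewrite /sh; case: eqP => [_|w0]; first by rewrite inE.
  have -> : (f \in PE d1 d2) = false by rewrite inE; rewrite inE in fN; rewrite fN.
  move=> ve; exists (rev_ord f).
    by rewrite rev_ordK negbK; rewrite inE in fN; rewrite fN lt0n; apply/eqP.
  move: ve.
  case: (pickP (fun u => shN_cand w u f && [forall u', shN_cand w u' f ==> (#|arc u f| <= #|arc u' f|)]))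
    => [u0 /andP [c0 /forallP m0]|none] ve.
    left; exists (rev_ord u0); split.
    - by rewrite candNE.
    - move=> v''; rewrite -(rev_ordK v'') candNE card_rev => cv''.
      by rewrite card_rev; have := m0 (rev_ord v''); rewrite cv'' => /implyP; apply.
    - by rewrite Ev rev_arc; move: ve; rewrite inE => /andP [].
  right => v''; apply/negP; rewrite -(rev_ordK v'') candNE => cv''.
  case: (@minimal_ex _ (fun x => shN_cand w x f) (fun x => #|arc x f|) _ cv'') => x cx mx.
  have := none x; rewrite /= cx /= => /negP; apply; apply/forallP => y.
  by apply/implyP => cy; exact: mx.
have Hchr : forall e f, ~~ l' e -> l' f ->
  d1 * \sum_(i in arc e f) fE l' i < d1 + d2 * \sum_(i in arc e f) fN l' i.
  move=> e' f' le' lf'.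
  have Ee : e' = rev_ord (rev_ord e') by rewrite rev_ordK.
  have Ef : f' = rev_ord (rev_ord f') by rewrite rev_ordK.
  rewrite negbK in le'.
  have := chr_both lf' le'; rewrite /= => -[_ H].
  rewrite !sum_rev in H.
  have e1 : \sum_(i in arc e' f') fE l' i = \sum_(i in arc e' f') fN l (rev_ord i).
    by apply: eq_bigr => i _; rewrite fEE fNE negbK.
  have e2 : \sum_(i in arc e' f') fN l' i = \sum_(i in arc e' f') fE l (rev_ord i).
    by apply: eq_bigr => i _; rewrite fEE fNE.
  by rewrite e1 e2.
have Hnz : 0 < \sum_i gN l' w' i + \sum_i gE l' w' i.
  by rewrite HgN HgE; move: pq; case: p {Hp HgE}; case: q {Hq HgN}.
have := core Hcomp Hcov Hchr Hal' Hbe' Hnz.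
by rewrite HgN HgE.
Qed.

End P2.


Theorem lemma5p18 (d1 d2 p q : nat) :
  (p, q) != (0, 0) ->
  (q * d1 <= p * d2 -> forall w : 'I_(d1 + d2) -> nat, ~ CG0plus d1 d2 p q w) /\
  (p * d2 <= q * d1 -> forall w : 'I_(d1 + d2) -> nat, ~ CG0minus d1 d2 p q w).
Proof.
move=> pq; split => H w HC.
  by have := part1 pq HC; lia.
by have := part2 pq HC; lia.
Qed.
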